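(* Let $M_1,M_2,M_3:\mathcal{L}_2^n\to\mathcal{L}_2^n$ be linear bounded invertible operators. For all $u,w\in\mathcal{L}_{2+}^n$ and all $v\in\mathcal{L}_{2+}^n\setminus\{0\}$, $$\theta_{M_1,M_3}(u,w)\le\theta_{M_1,M_2}(u,v)+\theta_{M_2,M_3}(v,w).$$
   Context: $\mathcal{L}_2^n$ is the Hilbert space of measurable $u:\mathbb{R}\to\mathbb{R}^n$ with $\|u\|_2^2=\int|u(t)|^2dt<\infty$ and inner product $\langle u,v\rangle=\int u(t)^Tv(t)\,dt$; $\mathcal{L}_{2+}=\{u\in\mathcal{L}_2:u(t)=0\ \text{for}\ t<0\}$. For linear bounded invertible $M_1,M_2$ on $\mathcal{L}_2$ and $u,v\in\mathcal{L}_{2+}$, the generalized angle $\theta_{M_1,M_2}(u,v)\in[0,\pi]$ is defined by $\cos\theta_{M_1,M_2}(u,v)=\langle M_1u,M_2v\rangle/(\|M_1u\|_2\|M_2v\|_2)$ if $u,v\ne0$, and $\theta_{M_1,M_2}(u,v)=0$ otherwise. *)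

(* Defs.v *)
From HB Require Import structures.
From mathcomp Require Import all_boot all_order all_algebra.
From mathcomp Require Import all_classical all_reals all_analysis.
Set Implicit Arguments. Unset Strict Implicit. Unset Printing Implicit Defensive.
Import Order.TTheory GRing.Theory Num.Theory.
Local Open Scope ring_scope.

Definition sig (R : realType) (n : nat) := R -> 'I_n -> R.

Section L2.
Variables (R : realType) (n : nat).

Definition L2 (u : sig R n) : Prop :=
  (forall i : 'I_n, measurable_fun setT (fun t => u t i)) /\
  (\int[lebesgue_measure]_(t in setT) ((\sum_(i < n) (u t i) ^+ 2)%:E) < +oo)%E.

Definition L2plus (u : sig R n) : Prop :=
  L2 u /\ (forall t, t < 0 -> forall i, u t i = 0).

Definition inner (u v : sig R n) : R :=
  Rintegral lebesgue_measure setT (fun t => \sum_(i < n) u t i * v t i).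

Definition norm2 (u : sig R n) : R := Num.sqrt (inner u u).

Definition sig_add (u v : sig R n) : sig R n := fun t i => u t i + v t i.
Definition sig_scale (a : R) (u : sig R n) : sig R n := fun t i => a * u t i.
Definition sig_sub (u v : sig R n) : sig R n := fun t i => u t i - v t i.

Definition L2eq (u v : sig R n) : Prop := norm2 (sig_sub u v) = 0.

(* M is a linear, bounded, invertible operator on L_2^n.  Elements of L_2 are
   equivalence classes, so all identities are up to L2eq. *)
Definition lbi_operator (M : sig R n -> sig R n) : Prop :=
  (forall u, L2 u -> L2 (M u)) /\
  (forall u v, L2 u -> L2 v -> L2eq u v -> L2eq (M u) (M v)) /\
  (forall a b u v, L2 u -> L2 v ->
     L2eq (M (sig_add (sig_scale a u) (sig_scale b v)))
          (sig_add (sig_scale a (M u)) (sig_scale b (M v)))) /\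
  (exists C : R, forall u, L2 u -> norm2 (M u) <= C * norm2 u) /\
  (forall u, L2 u -> L2eq (M u) (fun _ _ => 0) -> L2eq u (fun _ _ => 0)) /\
  (forall w, L2 w -> exists u, L2 u /\ L2eq (M u) w).

Definition gangle (M1 M2 : sig R n -> sig R n) (u v : sig R n) : R :=
  if `[< norm2 u <> 0 /\ norm2 v <> 0 >] then
    acos (inner (M1 u) (M2 v) / (norm2 (M1 u) * norm2 (M2 v)))
  else 0.

End L2.

(* Main.v *)
Require Import Defs.
From HB Require Import structures.
From mathcomp Require Import all_boot all_order all_algebra.
From mathcomp Require Import all_classical all_reals all_analysis.
From mathcomp Require Import measurable_realfun ring lra.
Import Order.TTheory GRing.Theory Num.Theory.
Local Open Scope ring_scope.
Set Implicit Arguments. Unset Strict Implicit.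

Section Real.
Variable R : realType.

Lemma dom2 (A B p : R) : 0 < A -> 0 < B ->
  (forall a b, 0 <= a^+2 * A + b^+2 * B + 2 * a * b * p) ->
  -1 <= p / (Num.sqrt A * Num.sqrt B) <= 1.
Proof.
move=> A0 B0 H.
have sA := sqr_sqrtr (ltW A0); have sB := sqr_sqrtr (ltW B0).
have hA : 0 < Num.sqrt A by rewrite sqrtr_gt0.
have hB : 0 < Num.sqrt B by rewrite sqrtr_gt0.
rewrite -sA -sB in H.
move: hA hB H; set a := Num.sqrt A; set b := Num.sqrt B => hA hB H.
have ab0 : a * b != 0 by rewrite mulf_neq0 // gt_eqF.
have [P ep] : exists P, p = P * (a * b).
  by exists (p / (a * b)); rewrite mulfVK.
rewrite ep in H *.
rewrite mulfK //.
have t0 : 0 < (a * b)^+2 by rewrite exprn_gt0 // mulr_gt0.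
have E1 : 0 <= (a * b)^+2 * (2 * (1 + P)).
  by have := H b a; congr (_ <= _); ring.
have E2 : 0 <= (a * b)^+2 * (2 * (1 - P)).
  by have := H b (- a); congr (_ <= _); ring.
rewrite pmulr_rge0 // in E1; rewrite pmulr_rge0 // in E2.
apply/andP; split; lra.
Qed.

Lemma tri_unit (P Q S : R) :
  (forall a b c, 0 <= a^+2 + b^+2 + c^+2 + 2 * a * b * P + 2 * a * c * S + 2 * b * c * Q) ->
  acos S <= acos P + acos Q.
Proof.
move=> U.
have dP : -1 <= P <= 1 by have := U 1 1 0; have := U 1 (-1) 0; move=> *; apply/andP; split; nra.
have dQ : -1 <= Q <= 1 by have := U 0 1 1; have := U 0 1 (-1); move=> *; apply/andP; split; nra.
have dS : -1 <= S <= 1 by have := U 1 0 1; have := U 1 0 (-1); move=> *; apply/andP; split; nra.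
set X := 1 - P^+2; set Z := 1 - Q^+2; set Y := S - P * Q.
have F : forall l m, 0 <= l^+2 * X + m^+2 * Z + 2 * l * m * Y.
  by move=> l m; have := U l (- l * P - m * Q) m; rewrite /X /Z /Y; nra.
have X0 : 0 <= X by rewrite /X; nra.
have Z0 : 0 <= Z by rewrite /Z; nra.
have YXZ : Y^+2 <= X * Z.
  have I1 := F Y (-X); have I2 := F (Z+1) (-Y).
  have [Xp|] := ltrP 0 X; first nra.
  move=> Xn; have X00 : X = 0 by apply/le_anti; rewrite Xn X0.
  rewrite X00 in I2 *; nra.
have sX := sqr_sqrtr X0; have sZ := sqr_sqrtr Z0.
have gX := sqrtr_ge0 X; have gZ := sqrtr_ge0 Z.
have key : P * Q - Num.sqrt X * Num.sqrt Z <= S.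
  have : - Y <= Num.sqrt X * Num.sqrt Z.
    have h0 : 0 <= Num.sqrt X * Num.sqrt Z by rewrite mulr_ge0.
    have h1 : (Num.sqrt X * Num.sqrt Z)^+2 = X * Z by rewrite exprMn sX sZ.
    nra.
  rewrite /Y; lra.
set al := acos P; set be := acos Q.
have a0 : 0 <= al by exact: acos_ge0.
have b0 : 0 <= be by exact: acos_ge0.
have api : al <= pi by exact: acos_lepi.
have bpi : be <= pi by exact: acos_lepi.
have g0 : 0 <= acos S by exact: acos_ge0.
have gpi : acos S <= pi by exact: acos_lepi.
have [le|lt] := lerP (al + be) pi; last by lra.
have cab : cos (al + be) <= S.
  rewrite cosD /al /be !acosK ?in_itv //= !sin_acos //.
rewrite leNgt; apply/negP => h.
have i1 : acos S \in `[0, pi] by rewrite in_itv /= g0 gpi.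
have i2 : al + be \in `[0, pi] by rewrite in_itv /= le addr_ge0.
have hm := @ltr_cos R (al + be) (acos S) i2 i1.
rewrite h acosK ?in_itv //= in hm; lra.
Qed.

Lemma tri (A B C p q r : R) : 0 < A -> 0 < B -> 0 < C ->
  (forall a b c, 0 <= a^+2 * A + b^+2 * B + c^+2 * C
       + 2 * a * b * p + 2 * a * c * r + 2 * b * c * q) ->
  acos (r / (Num.sqrt A * Num.sqrt C)) <=
  acos (p / (Num.sqrt A * Num.sqrt B)) + acos (q / (Num.sqrt B * Num.sqrt C)).
Proof.
move=> A0 B0 C0 H; apply: tri_unit => a b c.
have sA := sqr_sqrtr (ltW A0); have sB := sqr_sqrtr (ltW B0).
have sC := sqr_sqrtr (ltW C0).
have hA : Num.sqrt A != 0 by rewrite gt_eqF // sqrtr_gt0.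
have hB : Num.sqrt B != 0 by rewrite gt_eqF // sqrtr_gt0.
have hC : Num.sqrt C != 0 by rewrite gt_eqF // sqrtr_gt0.
have := H (a / Num.sqrt A) (b / Num.sqrt B) (c / Num.sqrt C).
move: sA sB sC hA hB hC.
generalize (Num.sqrt A) (Num.sqrt B) (Num.sqrt C) => sa sb sc <- <- <- hA hB hC.
congr (_ <= _); field.
by rewrite hA hB hC.
Qed.
End Real.

Section Aux.
Variables (R : realType) (n : nat).
Local Notation mu := (@lebesgue_measure R).
Definition Int (f : R -> R) := mu.-integrable setT (EFin \o f).

Lemma IntD f g : Int f -> Int g -> Int (fun t => f t + g t).
Proof. by move=> hf hg; apply: eq_integrable (integrableD _ hf hg). Qed.

Lemma IntZ c f : Int f -> Int (fun t => c * f t).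
Proof.
move=> hf; exact: eq_integrable (integrableZl _ c hf).
Qed.

Definition Pr (x y : sig R n) : R -> R := fun t => \sum_(i < n) x t i * y t i.

Lemma mPr x y : L2 x -> L2 y -> measurable_fun setT (Pr x y).
Proof.
move=> [mx _] [my _]; apply: measurable_sum => i.
exact: measurable_funM.
Qed.

Lemma IntF x : L2 x -> Int (Pr x x).
Proof.
move=> hx; have mx := mPr hx hx.
case: hx => _ hi; apply/integrableP; split.
  exact/measurable_EFinP.
apply: le_lt_trans hi; rewrite le_eqVlt; apply/orP; left; apply/eqP.
apply: eq_integral => t _ /=; rewrite ger0_norm; last first.
  by apply: sumr_ge0 => i _; rewrite -expr2 sqr_ge0.
by congr EFin; apply: eq_bigr => i _; rewrite expr2.
Qed.

Lemma IntP x y : L2 x -> L2 y -> Int (Pr x y).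
Proof.
move=> hx hy; apply: (le_integrable measurableT _ _ (IntD (IntF hx) (IntF hy))).
  by apply/measurable_EFinP; exact: (mPr hx hy).
move=> t _ /=; rewrite lee_fin.
rewrite [X in _ <= X]ger0_norm; last first.
  by apply: addr_ge0; apply: sumr_ge0 => i _; rewrite -expr2 sqr_ge0.
rewrite ler_norml /Pr -big_split /= -sumrN; apply/andP; split;
  apply: ler_sum => i _; rewrite ?mulrN; nra.
Qed.

Local Notation ip := (@inner R n).
Ltac solveInt := repeat first [apply: IntD | apply: IntZ | apply: IntP | assumption].

Lemma form x y z : L2 x -> L2 y -> L2 z -> forall a b c : R,
  0 <= a^+2 * ip x x + b^+2 * ip y y + c^+2 * ip z z
       + 2 * a * b * ip x y + 2 * a * c * ip x z + 2 * b * c * ip y z.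
Proof.
move=> hx hy hz a b c.
have -> : a^+2 * ip x x + b^+2 * ip y y + c^+2 * ip z z
       + 2 * a * b * ip x y + 2 * a * c * ip x z + 2 * b * c * ip y z
  = Rintegral mu setT (fun t => a^+2 * Pr x x t + b^+2 * Pr y y t + c^+2 * Pr z z t
       + 2 * a * b * Pr x y t + 2 * a * c * Pr x z t + 2 * b * c * Pr y z t).
  rewrite !RintegralD //; try solveInt.
  by rewrite !RintegralZl //; solveInt.
apply: Rintegral_ge0 => t _.
have -> : a^+2 * Pr x x t + b^+2 * Pr y y t + c^+2 * Pr z z t
       + 2 * a * b * Pr x y t + 2 * a * c * Pr x z t + 2 * b * c * Pr y z t
   = \sum_(i < n) (a * x t i + b * y t i + c * z t i) ^+ 2.
  rewrite /Pr !mulr_sumr -!big_split /=; apply: eq_bigr => i _; ring.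
by apply: sumr_ge0 => i _; exact: sqr_ge0.
Qed.
End Aux.

Section Main.
Variables (R : realType) (n : nat).
Local Notation ip := (@inner R n).

Lemma sub0 (f : sig R n) : sig_sub f (fun _ _ => 0) = f.
Proof. by apply/funext => t; apply/funext => i; rewrite /sig_sub subr0. Qed.

Lemma ip_ge0 (x : sig R n) : 0 <= ip x x.
Proof.
apply: Rintegral_ge0 => t _; apply: sumr_ge0 => i _; rewrite -expr2; exact: sqr_ge0.
Qed.

Lemma pos (M : sig R n -> sig R n) u : lbi_operator M -> L2 u -> norm2 u <> 0 ->
  0 < ip (M u) (M u).
Proof.
move=> [_ [_ [_ [_ [inj _]]]]] hu nu.
rewrite lt_def ip_ge0 andbT; apply/eqP => e.
apply: nu; have := inj u hu; rewrite /L2eq !sub0 => /(_ _).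
by rewrite /norm2 e sqrtr0 => /(_ erefl).
Qed.

Lemma gangle_ge0 (M M' : sig R n -> sig R n) u v :
  lbi_operator M -> lbi_operator M' -> L2 u -> L2 v -> 0 <= gangle M M' u v.
Proof.
move=> hM hM' hu hv; rewrite /gangle; case: asboolP => [[nu nv]|_] //.
have Lx := hM.1 _ hu; have Ly := hM'.1 _ hv.
apply: acos_ge0; apply: dom2; [exact: pos|exact: pos|].
move=> a b; have := form Lx Ly Ly a b 0; nra.
Qed.

Lemma main (M1 M2 M3 : sig R n -> sig R n) :
  lbi_operator M1 -> lbi_operator M2 -> lbi_operator M3 ->
  forall u v w : sig R n,
    L2plus u -> L2plus w -> L2plus v -> norm2 v <> 0 ->
    gangle M1 M3 u w <= gangle M1 M2 u v + gangle M2 M3 v w.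
Proof.
move=> h1 h2 h3 u v w [hu _] [hw _] [hv _] nv.
have g12 := gangle_ge0 h1 h2 hu hv.
have g23 := gangle_ge0 h2 h3 hv hw.
have [nu|nu] := eqVneq (norm2 u) 0.
  rewrite {1}/gangle asboolF; last by case.
  by rewrite addr_ge0.
have [nw|nw] := eqVneq (norm2 w) 0.
  rewrite {1}/gangle asboolF; last by case.
  by rewrite addr_ge0.
have nu' : norm2 u <> 0 by apply/eqP.
have nw' : norm2 w <> 0 by apply/eqP.
have pA := pos h1 hu nu'; have pB := pos h2 hv nv; have pC := pos h3 hw nw'.
have F := form (h1.1 _ hu) (h2.1 _ hv) (h3.1 _ hw).
have T := tri pA pB pC F.
rewrite /gangle !asboolT //; by split.
Qed.
End Main.

Unset Implicit Arguments.
Theorem lemma4 (R : realType) (n : nat) (M1 M2 M3 : sig R n -> sig R n) :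
  lbi_operator M1 -> lbi_operator M2 -> lbi_operator M3 ->
  forall u v w : sig R n,
    L2plus u -> L2plus w -> L2plus v -> norm2 v <> 0 ->
    gangle M1 M3 u w <= gangle M1 M2 u v + gangle M2 M3 v w.
Proof. exact: main. Qed.
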